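(* Let $Y$ be a finite connected simple undirected graph. If $Y$ is not bipartite then $\delta(Y)=\tfrac12\kappa(Y)$. If $Y$ is bipartite then $\delta(Y)=\tfrac12(\kappa(Y)+1)$.
   Context: $\mathsf{Acyc}(Y)$ is the set of acyclic orientations of $Y$. A click at a vertex $x$ that is a source of an orientation reverses all edges incident to $x$, making $x$ a sink. Two acyclic orientations are $\kappa$-equivalent if one can be transformed into the other by a finite sequence of clicks; $\kappa(Y)$ is the number of $\kappa$-equivalence classes. For $O\in\mathsf{Acyc}(Y)$ let $O^{\mathrm{rev}}$ denote the orientation with every edge reversed. $\delta$-equivalence is the equivalence relation on $\mathsf{Acyc}(Y)$ generated by clicks and by $O\mapsto O^{\mathrm{rev}}$, and $\delta(Y)$ is the number of $\delta$-equivalence classes. *)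

(* Defs.v *)
From mathcomp Require Import all_boot.
Set Implicit Arguments. Unset Strict Implicit. Unset Printing Implicit Defensive.

Section Orientations.
Variables (T : finType) (e : rel T).

Definition simple_graph := symmetric e /\ irreflexive e.
Definition connected_graph := forall x y : T, connect e x y.
Definition bipartite := exists c : T -> bool, forall x y, e x y -> c x != c y.

Definition arcs (O : {set T * T}) : rel T := fun x y => (x, y) \in O.

Definition is_orientation (O : {set T * T}) : bool :=
  [forall x, forall y,
     (((x, y) \in O) ==> e x y) &&
     (e x y ==> (((x, y) \in O) (+) ((y, x) \in O)))].

Definition is_acyclic (O : {set T * T}) : bool :=
  [forall x, forall y, ((x, y) \in O) ==> ~~ connect (arcs O) y x].

Definition Acyc : {set {set T * T}} :=
  [set O | is_orientation O && is_acyclic O].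

Definition is_source (O : {set T * T}) (x : T) : bool :=
  [forall y, (y, x) \notin O].

Definition click (O : {set T * T}) (x : T) : {set T * T} :=
  [set p | if (p.1 == x) || (p.2 == x) then (p.2, p.1) \in O else p \in O].

Definition rev_orient (O : {set T * T}) : {set T * T} :=
  [set p | (p.2, p.1) \in O].

Definition click_step (O O' : {set T * T}) : bool :=
  [&& O \in Acyc, O' \in Acyc & [exists x, is_source O x && (O' == click O x)]].

Definition rev_step (O O' : {set T * T}) : bool :=
  [&& O \in Acyc, O' \in Acyc & O' == rev_orient O].

Definition sym_closure (r : rel {set T * T}) : rel {set T * T} :=
  fun O O' => r O O' || r O' O.

Definition kappa_equiv : rel {set T * T} := connect (sym_closure click_step).
Definition delta_equiv : rel {set T * T} :=
  connect (sym_closure (fun O O' => click_step O O' || rev_step O O')).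

Definition num_classes (R : rel {set T * T}) : nat :=
  #|[set [set O' in Acyc | R O O'] | O in Acyc]|.

Definition kappa : nat := num_classes kappa_equiv.
Definition delta : nat := num_classes delta_equiv.

End Orientations.

(* Main.v *)
Require Import Defs.
From Stdlib Require Import ZArith Lia.
From mathcomp Require Import all_boot zify.
Set Implicit Arguments. Unset Strict Implicit. Unset Printing Implicit Defensive.

Lemma conn_ind (A : finType) (r : rel A) (P : A -> Prop) :
  (forall x y, P x -> r x y -> P y) -> forall x y, P x -> connect r x y -> P y.
Proof.
move=> H x y Px /connectP [p pth ->]; elim: p x Px pth => //= z p IH x Px /andP[rxz pz].
exact: IH (H _ _ Px rxz) pz.
Qed.

Section Main.
Variables (T : finType) (e : rel T).
Hypothesis esym : symmetric e.
Hypothesis eirr : irreflexive e.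
Implicit Types (O : {set T * T}) (x y : T).

Local Notation A := (Acyc e).
Local Notation kap := (kappa_equiv e).
Local Notation del := (delta_equiv e).
Local Notation rev := (@rev_orient T).

Lemma AcycE O : (O \in A) = is_orientation e O && is_acyclic O.
Proof. by rewrite inE. Qed.

Lemma orient_e O x y : O \in A -> (x, y) \in O -> e x y.
Proof.
rewrite AcycE => /andP[/forallP/(_ x)/forallP/(_ y)/andP[/implyP H _] _]; exact: H.
Qed.

Lemma orient_xor O x y : O \in A -> e x y -> ((x, y) \in O) (+) ((y, x) \in O).
Proof.
rewrite AcycE => /andP[/forallP/(_ x)/forallP/(_ y)/andP[_ /implyP H] _]; exact: H.
Qed.

Lemma in_rev O p : (p \in rev O) = ((p.2, p.1) \in O).
Proof. by rewrite inE. Qed.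

Lemma revK O : rev (rev O) = O.
Proof. by apply/setP => -[x y]; rewrite !inE. Qed.

Lemma rev_Acyc O : O \in A -> rev O \in A.
Proof.
move=> OA; rewrite AcycE; apply/andP; split.
  apply/forallP=> x; apply/forallP=> y; rewrite !in_rev /=; apply/andP; split.
    by apply/implyP => /(orient_e OA); rewrite esym.
  by apply/implyP => exy; rewrite addbC; apply: orient_xor; rewrite // esym.
apply/forallP=> x; apply/forallP=> y; apply/implyP; rewrite in_rev /= => yx.
have -> : connect (arcs (rev O)) y x = connect (arcs O) x y.
  have := connect_rev (arcs O) y x; rewrite /= => <-.
  apply: eq_connect => a b; by rewrite /arcs in_rev.
move: OA; rewrite AcycE => /andP[_ /forallP/(_ y)/forallP/(_ x)/implyP]; exact.
Qed.

Lemma in_click O x p : (p \in click O x) =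
  (if (p.1 == x) || (p.2 == x) then (p.2, p.1) \in O else p \in O).
Proof. by rewrite inE. Qed.

Lemma clickK O x : click (click O x) x = O.
Proof.
apply/setP => -[a b]; rewrite !in_click /=.
by case: (a == x); case: (b == x).
Qed.

Lemma rev_click O x : rev (click O x) = click (rev O) x.
Proof.
apply/setP => -[a b]; rewrite !(in_click, in_rev) /=.
by rewrite orbC; case: ifP.
Qed.

Lemma click_step_rev O O' : click_step e O O' -> click_step e (rev O') (rev O).
Proof.
case/and3P => OA O'A /existsP[x /andP[sx /eqP eO]]; subst O'.
apply/and3P; split.
    by apply: rev_Acyc.
  by apply: rev_Acyc.
apply/existsP; exists x; apply/andP; split.
  apply/forallP => y; rewrite in_rev in_click /= eqxx /=.
  by move/forallP: sx => /(_ y).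
by rewrite rev_click clickK.
Qed.

Lemma kstep_sym : symmetric (sym_closure (click_step e)).
Proof. by move=> a b; rewrite /sym_closure orbC. Qed.

Lemma kap_sym O O' : kap O O' = kap O' O.
Proof. exact: (sym_connect_sym kstep_sym). Qed.

Lemma kap_trans O1 O2 O3 : kap O1 O2 -> kap O2 O3 -> kap O1 O3.
Proof. exact: connect_trans. Qed.

Lemma kap_refl O : kap O O.
Proof. exact: connect0. Qed.

Lemma kap_rev O O' : kap O O' -> kap (rev O) (rev O').
Proof.
apply: (@conn_ind _ _ (fun z => kap (rev O) (rev z))); last exact: kap_refl.
move=> z w H /orP[] st; apply: (kap_trans H); apply: connect1.
  by apply/orP; right; apply: click_step_rev.
by apply/orP; left; apply: click_step_rev.
Qed.

Lemma kap_Acyc O O' : O \in A -> kap O O' -> O' \in A.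
Proof.
move=> OA; apply: (@conn_ind _ _ (fun z => z \in A)) => // z w _.
by case/orP=> /and3P[].
Qed.

Lemma dstep_sym : symmetric (sym_closure (fun O O' => click_step e O O' || rev_step e O O')).
Proof. by move=> a b; rewrite /sym_closure orbC. Qed.

Lemma del_sym O O' : del O O' = del O' O.
Proof. exact: (sym_connect_sym dstep_sym). Qed.

Lemma del_trans O1 O2 O3 : del O1 O2 -> del O2 O3 -> del O1 O3.
Proof. exact: connect_trans. Qed.

Lemma kap_del O O' : kap O O' -> del O O'.
Proof.
apply: connect_sub => a b /orP[] st; apply: connect1; apply/orP;
  [left|right]; by rewrite st.
Qed.

Lemma del_rev O : O \in A -> del O (rev O).
Proof.
move=> OA; apply: connect1; apply/orP; left; apply/orP; right.
by apply/and3P; split; [|exact: rev_Acyc|].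
Qed.

Lemma delE O O' : O \in A -> del O O' = kap O O' || kap O (rev O').
Proof.
move=> OA; apply/idP/idP; last first.
  case/orP => H; first exact: kap_del.
  apply: (del_trans (kap_del H)).
  have RA : rev O' \in A by apply: kap_Acyc H.
  by rewrite -{2}(revK O'); apply: del_rev.
move=> Hd; apply: (@conn_ind _ _ (fun z => kap O z || kap O (rev z)) _ O O' _ Hd); last by rewrite kap_refl.
move=> z w /orP H /orP[] /orP[] st.
- case: H => H; apply/orP; [left|right]; apply: (kap_trans H).
    by apply: connect1; apply/orP; left.
  by apply: kap_rev; apply: connect1; apply/orP; left.
- case/and3P: st => _ _ /eqP ->; rewrite revK orbC; exact/orP.
- case: H => H; apply/orP; [left|right]; apply: (kap_trans H).
    by apply: connect1; apply/orP; right.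
  by apply: kap_rev; apply: connect1; apply/orP; right.
- case/and3P: st => _ _ /eqP ez; rewrite ez revK in H; rewrite orbC; exact/orP.
Qed.


Definition sg O x y : Z := if (x, y) \in O then 1%Z else (-1)%Z.

Lemma sg_rev O x y : sg (rev O) x y = sg O y x.
Proof. by rewrite /sg in_rev. Qed.

Definition Rk O O' := exists k : T -> Z,
  forall x y, e x y -> sg O' x y = (sg O x y - 2 * (k x - k y))%Z.

Lemma Rk_sym O O' : Rk O O' -> Rk O' O.
Proof. case=> k H; exists (fun z => - k z)%Z => x y exy; have := H x y exy; lia. Qed.

Lemma Rk_trans O1 O2 O3 : Rk O1 O2 -> Rk O2 O3 -> Rk O1 O3.
Proof.
case=> k H [k' H']; exists (fun z => k z + k' z)%Z => x y exy.
have := H x y exy; have := H' x y exy; lia.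
Qed.

Lemma Rk_click O O' : click_step e O O' -> Rk O O'.
Proof.
case/and3P => OA _ /existsP[x /andP[/forallP sx /eqP ->]].
exists (fun z => if z == x then 1%Z else 0%Z) => a b eab.
rewrite /sg !in_click /=.
have xo := orient_xor OA eab.
case: (eqVneq a x) => [ea|na]; case: (eqVneq b x) => [eb|nb] /=.
- by subst; rewrite eirr in eab.
- subst a; have := sx b; move: xo; case: ((b, x) \in O); case: ((x, b) \in O) => //= _ _; lia.
- subst b; have := sx a; move: xo; case: ((a, x) \in O); case: ((x, a) \in O) => //= _ _; lia.
- lia.
Qed.

Lemma kap_Rk O O' : kap O O' -> Rk O O'.
Proof.
move=> H; apply: (@conn_ind _ _ (fun z => Rk O z) _ O O' _ H); last first.
  by exists (fun _ => 0%Z) => x y _; lia.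
move=> z w Hz /orP[] st; apply: (Rk_trans Hz).
  exact: Rk_click.
by apply: Rk_sym; apply: Rk_click.
Qed.

Lemma self_rev_grad O : O \in A -> kap O (rev O) ->
  exists k : T -> Z, forall x y, e x y -> ((x, y) \in O <-> k x = (k y + 1)%Z) /\
     (k x = (k y + 1)%Z \/ k y = (k x + 1)%Z).
Proof.
move=> OA /kap_Rk [k H]; exists k => x y exy.
have := H x y exy; have xo := orient_xor OA exy.
rewrite sg_rev /sg; move: xo.
case: ((x, y) \in O); case: ((y, x) \in O) => // _; cbv iota => E;
  (split; [split => h; first [done | exfalso; lia | lia] | lia]).
Qed.

Lemma nonbip_no_fix O : O \in A -> kap O (rev O) -> bipartite e.
Proof.
move=> OA /(self_rev_grad OA) [k H]; exists (fun z => Z.odd (k z)) => x y exy.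
have [_ [->|->]] := H x y exy; rewrite Z.add_1_r Z.odd_succ -Z.negb_odd;
  by case: (Z.odd _).
Qed.

Definition G (g : T -> nat) : {set T * T} := [set p | e p.1 p.2 && (g p.2 < g p.1)].
Definition good (g : T -> nat) := forall x y, e x y -> g x = (g y).+1 \/ g y = (g x).+1.

Lemma in_G g p : (p \in G g) = e p.1 p.2 && (g p.2 < g p.1).
Proof. by rewrite inE. Qed.

Lemma G_conn g a b : connect (arcs (G g)) a b -> g b <= g a.
Proof.
move=> H; apply: (@conn_ind _ _ (fun z => g z <= g a) _ a b _ H) => //.
move=> z w le; rewrite /arcs in_G /= => /andP[_ lt]; lia.
Qed.

Lemma G_Acyc g : good g -> G g \in A.
Proof.
move=> gd; rewrite AcycE; apply/andP; split.
  apply/forallP=> x; apply/forallP=> y; rewrite !in_G /=; apply/andP; split.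
    by apply/implyP => /andP[].
  apply/implyP => exy; rewrite exy -esym exy /=.
  by have [->|->] := gd x y exy; rewrite ltnSn /= ?ltnNge ?leqnSn // ltnS leqnn.
apply/forallP=> x; apply/forallP=> y; apply/implyP; rewrite in_G /= => /andP[_ lt].
by apply/negP => /G_conn; lia.
Qed.

Lemma eq_G g1 g2 : g1 =1 g2 -> G g1 = G g2.
Proof. by move=> E; apply/setP => p; rewrite !in_G !E. Qed.

Definition lower (g : T -> nat) x := fun z => if z == x then g x - 2 else g z.

Lemma G_click g x : good g -> (forall y, g y <= g x) -> 2 <= g x ->
  click_step e (G g) (G (lower g x)) /\ good (lower g x).
Proof.
move=> gd mx two.
have nb : forall y, e x y -> g y = (g x).-1.
  move=> y exy; have := mx y; have [E|E] := gd x y exy; lia.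
have nb' : forall y, e y x -> g y = (g x).-1 by move=> y; rewrite esym; apply: nb.
have ne : forall y, e x y -> (y == x) = false.
  by move=> y exy; apply/negP => /eqP E; subst y; rewrite eirr in exy.
have ne' : forall y, e y x -> (y == x) = false.
  by move=> y; rewrite esym; apply: ne.
have gd' : good (lower g x).
  move=> a b eab; rewrite /lower.
  case: (eqVneq a x) => [ea|na]; case: (eqVneq b x) => [eb|nb2].
  - by subst; rewrite eirr in eab.
  - subst a; have := nb b eab; lia.
  - subst b; have := nb' a eab; lia.
  - exact: gd.
split=> //; apply/and3P; split; [exact: G_Acyc | exact: G_Acyc |].
apply/existsP; exists x; apply/andP; split.
  apply/forallP => y; rewrite in_G /=; apply/negP => /andP[eyx lt].
  have := nb' y eyx; lia.
apply/eqP/setP => -[a b]; rewrite in_click !in_G /= /lower.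
case: (eqVneq a x) => [ea|na]; case: (eqVneq b x) => [eb|nb2] /=.
- by subst; rewrite eirr.
- subst a; rewrite [e b x]esym; case eb: (e x b) => //=.
  move: (nb b eb) => E; apply/idP/idP => ?; lia.
- subst b; rewrite [e x a]esym; case ea: (e a x) => //=.
  move: (nb' a ea) => E; apply/idP/idP => ?; lia.
- by [].
Qed.

Lemma descend n g : \sum_z g z <= n -> good g ->
  exists g0, [/\ good g0, (forall z, g0 z <= 1), (forall z, odd (g0 z) = odd (g z))
                & kap (G g) (G g0)].
Proof.
elim: n g => [|n IH] g sm gd.
  exists g; split=> //; last exact: kap_refl.
  move=> z; move: sm; rewrite (bigD1 z) //=; lia.
case: (pickP (fun z => 1 < g z)) => [x1 /= gx1|none]; last first.
  exists g; split=> //; last exact: kap_refl.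
  by move=> z; have := none z; rewrite /= ltnNge => /negbFE.
have cT : 0 < #|T| by apply/card_gt0P; exists x1.
have [x mxE] := eq_bigmax g cT.
have mx : forall y, g y <= g x by move=> y; rewrite -mxE leq_bigmax.
have two : 2 <= g x by have := mx x1; lia.
have [st gd'] := G_click gd mx two.
have sm' : \sum_z lower g x z <= n.
  have E : \sum_(i | i != x) lower g x i = \sum_(i | i != x) g i.
    by apply: eq_bigr => i /negbTE; rewrite /lower => ->.
  rewrite (bigD1 x) //= E {1}/lower eqxx; move: sm; rewrite (bigD1 x) //=; lia.
have [g0 [gd0 le0 od0 k0]] := IH _ sm' gd'.
exists g0; split=> //.
  move=> z; rewrite od0 /lower; case: eqP => // ->.
  by rewrite oddB // addbF.
apply: kap_trans k0; apply: connect1; by apply/orP; left.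
Qed.

Hypothesis econn : connected_graph e.

Lemma two_level g1 g2 : good g1 -> good g2 -> (forall z, g1 z <= 1) -> (forall z, g2 z <= 1) ->
  G g2 = G g1 \/ G g2 = rev (G g1).
Proof.
move=> gd1 gd2 l1 l2.
have fc : forall x y, (g1 y == g2 y) = (g1 x == g2 x).
  move=> x y; apply: (@conn_ind _ _ (fun z => (g1 z == g2 z) = (g1 x == g2 x)) _ x y _ (econn x y)) => //.
  move=> z w H ezw; rewrite -H.
  have := l1 z; have := l1 w; have := l2 z; have := l2 w.
  have := gd1 z w ezw; have := gd2 z w ezw.
  move=> A1 A2 B1 B2 B3 B4; apply/idP/idP => /eqP ?; apply/eqP; lia.
case: (pickP (@predT T)) => [x0 _|none]; last first.
  by left; apply/setP => -[a b]; have := none a.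
case E: (g1 x0 == g2 x0); [left|right]; apply/setP => -[a b]; rewrite ?in_rev !in_G /=.
  move: (fc x0 a) (fc x0 b); rewrite E => /eqP -> /eqP -> //.
move: (fc x0 a) (fc x0 b); rewrite E => /negbT Ha /negbT Hb.
rewrite [e b a]esym; case: (e a b) => //=.
have := l1 a; have := l1 b; have := l2 a; have := l2 b; move: Ha Hb => /eqP Ha /eqP Hb.
move=> C1 C2 C3 C4; apply/idP/idP => ?; lia.
Qed.

Lemma two_level_fix g : good g -> (forall z, g z <= 1) -> kap (G g) (rev (G g)).
Proof.
move=> gd l1.
pose h := fun z => 2 - g z.
have gdh : good h.
  move=> x y exy; rewrite /h; have := l1 x; have := l1 y; have := gd x y exy; lia.
have Gh : G h = rev (G g).
  apply/setP => -[a b]; rewrite in_rev !in_G /= [e b a]esym /h.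
  case: (e a b) => //=; have := l1 a; have := l1 b; move=> C1 C2; apply/idP/idP => ?; lia.
have [g0 [gd0 le0 od0 k0]] := descend (leqnn _) gdh.
have E : g0 =1 g.
  move=> z; have := od0 z; have := le0 z; have := l1 z; rewrite /h.
  case: (g z) => [|[|m]] //; case: (g0 z) => [|[|m']] //.
rewrite kap_sym -Gh; by rewrite (eq_G E) in k0.
Qed.


Definition cls O := [set O' in A | kap O O'].
Definition dcls O := [set O' in A | del O O'].
Definition phi (C : {set {set T * T}}) := [set O' in A | [exists O in C, del O O']].

Lemma in_cls O O' : (O' \in cls O) = (O' \in A) && kap O O'.
Proof. by rewrite /cls in_set. Qed.
Lemma in_dcls O O' : (O' \in dcls O) = (O' \in A) && del O O'.
Proof. by rewrite /dcls in_set. Qed.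
Lemma in_phi C O' : (O' \in phi C) = (O' \in A) && [exists O in C, del O O'].
Proof. by rewrite /phi in_set. Qed.

Lemma cls_eq O1 O2 : kap O1 O2 -> cls O1 = cls O2.
Proof.
move=> H; apply/setP => O; rewrite !in_cls; case: (O \in A) => //=.
apply/idP/idP => H2; first by apply: (kap_trans _ H2); rewrite kap_sym.
exact: kap_trans H H2.
Qed.

Lemma dcls_eq O1 O2 : del O1 O2 -> dcls O1 = dcls O2.
Proof.
move=> H; apply/setP => O; rewrite !in_dcls; case: (O \in A) => //=.
apply/idP/idP => H2; first by apply: (del_trans _ H2); rewrite del_sym.
exact: del_trans H H2.
Qed.

Lemma cls_eqE O1 O2 : O2 \in A -> (cls O1 == cls O2) = kap O1 O2.
Proof.
move=> O2A; apply/idP/idP => [/eqP E|/cls_eq ->//].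
have : O2 \in cls O2 by rewrite in_cls O2A kap_refl.
by rewrite -E in_cls => /andP[].
Qed.

Lemma phi_cls O : O \in A -> phi (cls O) = dcls O.
Proof.
move=> OA; apply/setP => O'; rewrite in_phi in_dcls; case: (O' \in A) => //=.
apply/idP/idP => [/existsP[O1 /andP[]]|H].
  by rewrite in_cls => /andP[_ /kap_del H1 H2]; apply: del_trans H1 H2.
by apply/existsP; exists O; rewrite in_cls OA kap_refl.
Qed.

Lemma fiber O : O \in A ->
  [set C in [set cls O1 | O1 in A] | phi C == dcls O] = [set cls O; cls (rev O)].
Proof.
move=> OA; apply/setP => C; rewrite in_set in_set2; apply/idP/idP.
  case/andP => /imsetP[O1 O1A ->]; rewrite phi_cls // => /eqP E.
  have : O1 \in dcls O by rewrite -E in_dcls O1A; exact: connect0.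
  rewrite in_dcls => /andP[_]; rewrite delE // => /orP[H|H].
    by rewrite (cls_eq H) eqxx.
  apply/orP; right; apply/eqP; apply: cls_eq; rewrite kap_sym.
  by have := kap_rev H; rewrite revK.
case/orP => /eqP ->; apply/andP; split.
- by apply/imsetP; exists O.
- by rewrite phi_cls.
- by apply/imsetP; exists (rev O) => //; apply: rev_Acyc.
- by rewrite phi_cls ?rev_Acyc //; apply/eqP/dcls_eq; rewrite del_sym; apply: del_rev.
Qed.

Lemma fiber_card O : O \in A ->
  #|[set C in [set cls O1 | O1 in A] | phi C == dcls O]| = if kap O (rev O) then 1 else 2.
Proof.
move=> OA; rewrite fiber // cards2 cls_eqE ?rev_Acyc //; by case: (kap _ _).
Qed.

Lemma kappa_sum : kappa e = \sum_(d in [set dcls O | O in A])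
   #|[set C in [set cls O1 | O1 in A] | phi C == d]|.
Proof.
rewrite /kappa /num_classes -/(kappa_equiv e) -sum1_card.
rewrite (partition_big phi (fun d => d \in [set dcls O | O in A])); last first.
  by move=> C /imsetP[O OA ->]; rewrite phi_cls //; apply/imsetP; exists O.
apply: eq_bigr => d _; rewrite sum1_card; apply: eq_card => C; by rewrite in_set.
Qed.

Lemma delta_card : delta e = #|[set dcls O | O in A]|.
Proof. by []. Qed.

Lemma nonbip_count : ~ bipartite e -> 2 * delta e = kappa e.
Proof.
move=> nb; rewrite kappa_sum delta_card (eq_bigr (fun _ => 2)) ?sum_nat_const; first lia.
move=> d /imsetP[O OA ->]; rewrite fiber_card //; case K: (kap O (rev O)) => //.
by case: nb; apply: nonbip_no_fix K.
Qed.

Variable c : T -> bool.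
Hypothesis cbip : forall x y, e x y -> c x != c y.

Definition O0 := G (fun z => nat_of_bool (c z)).

Lemma good_c : good (fun z => nat_of_bool (c z)).
Proof. by move=> x y /cbip; case: (c x); case: (c y) => //= _; first [by left | by right]. Qed.

Lemma O0_Acyc : O0 \in A.
Proof. exact: G_Acyc good_c. Qed.

Lemma O0_fix : kap O0 (rev O0).
Proof. by apply: two_level_fix good_c _ => z; case: (c z). Qed.

Lemma fix_unique O : O \in A -> kap O (rev O) -> kap O O0.
Proof.
move=> OA /(self_rev_grad OA) [k H].
pose S := \max_z Z.to_nat (- k z)%Z.
have HS : forall z, (- k z <= Z.of_nat S)%Z.
  move=> z; have := @leq_bigmax _ (fun z => Z.to_nat (- k z)%Z) z; rewrite -/S; lia.
pose g := fun z => Z.to_nat (k z + Z.of_nat S)%Z.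
have gd : good g.
  move=> x y exy; have [_ [E|E]] := H x y exy; have := HS x; have := HS y; rewrite /g; lia.
have OG : O = G g.
  apply/setP => -[a b]; rewrite in_G /=.
  case eab: (e a b); last by apply/negP => /(orient_e OA); rewrite eab.
  have [E1 E2] := H a b eab; have := HS a; have := HS b; rewrite /g => C1 C2.
  apply/idP/idP => [/E1|] ?; last apply/E1; lia.
have [g0 [gd0 le0 _ k0]] := descend (leqnn _) gd.
rewrite OG; apply: (kap_trans k0).
have [E|E] := two_level good_c gd0 (fun z => leq_b1 (c z)) le0; rewrite E -/O0.
  exact: kap_refl.
by rewrite kap_sym; exact: O0_fix.
Qed.
Lemma bip_count : 2 * delta e = kappa e + 1.
Proof.
rewrite kappa_sum delta_card.
set D := [set dcls O | O in A].
have O0D : dcls O0 \in D by apply/imsetP; exists O0 => //; exact: O0_Acyc.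
rewrite (bigD1 (dcls O0)) //= fiber_card ?O0_Acyc // O0_fix.
rewrite (eq_bigr (fun _ => 2)); last first.
  move=> d /andP[/imsetP[O OA ->] ne]; rewrite fiber_card //.
  case K: (kap O (rev O)) => //; exfalso; move/negP: ne; apply.
  by apply/eqP/dcls_eq/kap_del/fix_unique.
rewrite (eq_bigl (mem [predD1 D & dcls O0])); last by move=> d; rewrite !inE andbC.
rewrite sum_nat_const (cardD1 (dcls O0) D) O0D /=; set m := #|_|; lia.
Qed.

End Main.

Theorem proposition3 (T : finType) (e : rel T) :
  simple_graph e -> connected_graph e ->
  (~ bipartite e -> 2 * delta e = kappa e) /\
  (bipartite e -> 2 * delta e = kappa e + 1).
Proof.
move=> [esym eirr] econn; split => [nb|[c cb]].
  exact: nonbip_count.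
exact: bip_count esym eirr econn c cb.
Qed.
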